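(* Let $p\ge q\ge 1$ be integers and $Q=\#^{p}-\#^{q}$. For $k\ge 1$ let $L(k)$ denote the maximal length of a binary word with exactly $k$ zeros that is not detected by $Q$. Then: (i) if $p\ge 2q+1$, then $L(k)=(k+1)p+q$ for all $k\ge1$; (ii) if $q\le p\le 2q+1$, then for all $\ell\ge 0$, $L(2\ell+1)=(\ell+2)p+(2\ell+1)q+\ell$, and for all $\ell\ge1$, $L(2\ell)=(\ell+1)p+(2\ell+1)q+\ell$. Consequently the $k$-critical length of $Q$ equals $L(k)+1$.
   Context: A seed is a finite word over $\{\#,-\}$ beginning and ending with $\#$ ($-$ is called a joker). A seed $Q$ of length $s$ matches a binary word $w$ at position $i$ ($1\le i\le |w|-s+1$) if $w[i+t-1]=1$ for every $t$ with $Q[t]=\#$; $Q$ detects $w$ if it matches $w$ at some position. The $k$-critical length of $Q$ is the minimal $m$ such that $Q$ detects every binary word of length $m$ with exactly $k$ zeros. *)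

(* Defs.v *)
From mathcomp Require Import all_boot.
Set Implicit Arguments. Unset Strict Implicit. Unset Printing Implicit Defensive.

(* A seed is a seq bool: true = '#', false = '-' (joker).
   A binary word is a seq bool: true = 1, false = 0.  Positions are 0-based. *)

Definition matches (Q w : seq bool) (i : nat) : bool :=
  (i + size Q <= size w) &&
  all (fun t => nth false Q t ==> nth false w (i + t)) (iota 0 (size Q)).

Definition detects (Q w : seq bool) : bool :=
  has (matches Q w) (iota 0 (size w).+1).

Definition nzeros (w : seq bool) : nat := count_mem false w.

Definition seedPQ (p q : nat) : seq bool := nseq p true ++ false :: nseq q true.

Definition max_undetected_len (Q : seq bool) (k L : nat) : Prop :=
  (exists w : seq bool, [/\ size w = L, nzeros w = k & ~~ detects Q w]) /\
  (forall w : seq bool, nzeros w = k -> ~~ detects Q w -> size w <= L).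

Definition critical_length (Q : seq bool) (k m : nat) : Prop :=
  (forall n, m <= n -> forall w : seq bool, size w = n -> nzeros w = k -> detects Q w) /\
  (forall m', (forall n, m' <= n -> forall w : seq bool, size w = n -> nzeros w = k -> detects Q w) -> m <= m').

(* Main.v *)
Require Import Defs.
From mathcomp Require Import all_boot.
From Stdlib Require Import Lia.

Ltac mlia := repeat match goal with
 | H : is_true (leq _ _) |- _ => move/leP: H => H
 | H : is_true (_ != _) |- _ => move/eqP: H => H
 | H : is_true (_ == _) |- _ => move/eqP: H => H
 | |- is_true (leq _ _) => apply/leP
 | |- is_true (_ != _) => apply/eqP
 end;
 repeat match goal with
 | H : context [addn _ _] |- _ => rewrite -plusE in H
 | H : context [muln _ _] |- _ => rewrite -multE in H
 | H : context [subn _ _] |- _ => rewrite -minusE in H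
 end; rewrite -?plusE -?multE -?minusE; lia.

Lemma size_seed p q : size (seedPQ p q) = p + q + 1.
Proof. rewrite /seedPQ size_cat /= !size_nseq; mlia. Qed.

Lemma nth_seed p q t : t < p + q + 1 -> nth false (seedPQ p q) t = (t != p).
Proof.
move=> ht; rewrite /seedPQ nth_cat size_nseq.
case: (ltngtP t p) => h.
- by rewrite nth_nseq h.
- case e: (t - p) => [|j]; first by exfalso; mlia.
  rewrite /= nth_nseq ifT //; mlia.
- by rewrite h subnn.
Qed.

Lemma matchesP p q w i : matches (seedPQ p q) w i <->
  (i + (p + q + 1) <= size w) /\ (forall t, t < p + q + 1 -> t != p -> nth false w (i + t)).
Proof.
rewrite /matches size_seed; split.
- move/andP=> [hs /allP ha]; split=> // t ht htp.
  have := ha t; rewrite mem_iota leq0n add0n ht => /(_ isT).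
  by rewrite nth_seed // htp.
- move=> [hs ha]; apply/andP; split=> //; apply/allP => t.
  rewrite mem_iota leq0n add0n /= => ht.
  rewrite nth_seed //; apply/implyP => htp; exact: ha.
Qed.

Lemma detectsP p q w : detects (seedPQ p q) w <-> exists i, matches (seedPQ p q) w i.
Proof.
split.
- by move/hasP=> [i _ h]; exists i.
- move=> [i h]; apply/hasP; exists i => //.
  rewrite mem_iota leq0n add0n /=.
  move: h => /andP [hs _]; rewrite ltnS; exact: leq_trans (leq_addr _ _) hs.
Qed.

Lemma D1 p q u w : ~~ detects (seedPQ p q) (u ++ w) -> ~~ detects (seedPQ p q) w.
Proof.
move=> hd; apply/negP => /detectsP [i /matchesP [hs hm]]; move/negP: hd; apply.
apply/detectsP; exists (size u + i); apply/matchesP; split.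
- rewrite size_cat -addnA leq_add2l //.
- move=> t ht htp; rewrite -addnA nth_cat ltnNge leq_addr /= addKn; exact: hm.
Qed.

Lemma D2 p q m r : p + q + 1 <= m -> detects (seedPQ p q) (nseq m true ++ r).
Proof.
move=> hm; apply/detectsP; exists 0; apply/matchesP; split.
- rewrite size_cat size_nseq add0n; exact: leq_trans hm (leq_addr _ _).
- move=> t ht _; rewrite add0n nth_cat size_nseq ifT; last exact: leq_trans ht hm.
  by rewrite nth_nseq ifT //; exact: leq_trans ht hm.
Qed.

Lemma D3 p q a b r : p <= a -> q <= b ->
  detects (seedPQ p q) (nseq a true ++ false :: nseq b true ++ r).
Proof.
move=> ha hb; apply/detectsP; exists (a - p); apply/matchesP; split.
- rewrite size_cat size_nseq /= size_cat size_nseq; mlia.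
- move=> t ht htp; case: (ltnP (a - p + t) a) => h.
  + by rewrite nth_cat size_nseq h nth_nseq h.
  + have e : a - p + t - a = (t - p - 1).+1 by mlia.
    rewrite nth_cat size_nseq ltnNge h /= e /= nth_cat size_nseq ifT; last by mlia.
    rewrite nth_nseq ifT //; mlia.
Qed.

Lemma ND0 p q a : a <= p + q -> ~~ detects (seedPQ p q) (nseq a true).
Proof.
move=> ha; apply/negP => /detectsP [i /matchesP [hs _]]; rewrite size_nseq in hs; mlia.
Qed.

Lemma ND p q a w : a <= p + q -> ~~ detects (seedPQ p q) w ->
  (p <= a -> exists2 j, j < q & nth false w j = false) ->
  ~~ detects (seedPQ p q) (nseq a true ++ false :: w).
Proof.
move=> ha hw hj; apply/negP => /detectsP [i /matchesP [hs hm]].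
set W := nseq a true ++ false :: w in hs hm.
have nA : nth false W a = false by rewrite /W nth_cat size_nseq ltnn subnn.
have nB : forall j, nth false W (a + 1 + j) = nth false w j.
  move=> j; rewrite /W nth_cat size_nseq ltnNge -addnA leq_addr /= addKn add1n //.
have sW : size W = a + 1 + size w by rewrite /W size_cat size_nseq /=; mlia.
case: (ltnP a i) => hi.
- move/negP: hw; apply; apply/detectsP; exists (i - (a + 1)); apply/matchesP; split.
  + rewrite sW in hs; mlia.
  + move=> t ht htp; rewrite -nB.
    have -> : a + 1 + (i - (a + 1) + t) = i + t by mlia.
    exact: hm.
- case: (boolP (a - i == p)) => e.
  + have pa : p <= a by mlia.
    have [j hjq hjf] := hj pa.
    have H := hm (p + 1 + j).
    have e2 : i + (p + 1 + j) = a + 1 + j by mlia.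
    rewrite e2 nB hjf in H.
    have : false by apply: H; mlia.
    done.
  + case: (ltnP (a - i) (p + q + 1)) => h2.
    * have := hm _ h2 e; by rewrite subnKC // nA.
    * mlia.
Qed.

Lemma nz_cons a w : nzeros (nseq a true ++ false :: w) = (nzeros w).+1.
Proof. by rewrite /nzeros count_cat count_nseq /= mul0n. Qed.

Lemma nz_nseq a : nzeros (nseq a true) = 0.
Proof. by rewrite /nzeros count_nseq /= mul0n. Qed.

Lemma decomp w : exists a, w = nseq a true \/ exists w', w = nseq a true ++ false :: w'.
Proof.
elim: w => [|x w [a [-> | [w' ->]]]]; first by exists 0; left.
- case: x; first by exists a.+1; left.
  by exists 0; right; exists (nseq a true).
- case: x; first by exists a.+1; right; exists w'.
  by exists 0; right; exists (nseq a true ++ false :: w').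
Qed.

Lemma ub p q (F : nat -> nat) (hq : 1 <= q) (hqp : q <= p)
  (F0 : p + q <= F 0) (F1 : p + 2 * q <= F 1)
  (FC : forall k, p + F k <= F k.+1) (FD : forall k, p + 2 * q + 1 + F k <= F k.+2) :
  forall k w, nzeros w = k -> ~~ detects (seedPQ p q) w -> size w <= F k.
Proof.
move=> k; elim/ltn_ind: k => k IH w hk hd.
have [a [ew | [w' ew]]] := decomp w; subst w.
- case: (leqP a (p + q)) => ha.
  + rewrite size_nseq; rewrite nz_nseq in hk; subst k; exact: leq_trans ha F0.
  + by move: hd; rewrite -(cats0 (nseq a true)) D2 // addn1.
- case: (leqP a (p + q)) => ha; last by move: hd; rewrite D2 // addn1.
  rewrite nz_cons in hk; subst k.
  have hd' : ~~ detects (seedPQ p q) w' by apply: (@D1 p q (nseq a true ++ [:: false])); rewrite -catA.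
  rewrite size_cat size_nseq /=.
  case: (ltnP a p) => hap.
  + have h := IH (nzeros w') (ltnSn _) w' erefl hd'.
    have h2 := FC (nzeros w'); mlia.
  + have [b [ew | [w'' ew]]] := decomp w'; subst w'.
    * case: (ltnP b q) => hb; last by move: hd; rewrite -(cats0 (nseq b true)) D3.
      rewrite nz_nseq; rewrite size_nseq; mlia.
    * case: (ltnP b q) => hb; last by move: hd; rewrite D3.
      rewrite nz_cons.
      have hd'' : ~~ detects (seedPQ p q) w''.
        by apply: (@D1 p q (nseq b true ++ [:: false])); rewrite -catA.
      have hlt : nzeros w'' < (nzeros (nseq b true ++ false :: w'')).+1 by rewrite nz_cons; mlia.
      have h := IH (nzeros w'') hlt w'' erefl hd''.
      rewrite size_cat size_nseq /=.
      have h2 := FD (nzeros w''); mlia.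
Qed.

Fixpoint W p q k := if k is k'.+1 then nseq (p - 1) true ++ false :: W p q k' else nseq (p + q) true.

Lemma W_ok p q k (hq : 1 <= q) (hqp : q <= p) :
  [/\ size (W p q k) = (k + 1) * p + q, nzeros (W p q k) = k & ~~ detects (seedPQ p q) (W p q k)].
Proof.
elim: k => [|k [s z d]] /=.
- split; [rewrite size_nseq; mlia | exact: nz_nseq | exact: ND0].
- split; first by rewrite size_cat size_nseq /= s; mlia.
  + by rewrite nz_cons z.
  + apply: ND => //; first by mlia.
    move=> h; exfalso; mlia.
Qed.

Fixpoint V p q l := if l is l'.+1 then
  nseq (p + q) true ++ false :: nseq (q - 1) true ++ false :: V p q l' else nseq (p + q) true.

Lemma V_ok p q l (hq : 1 <= q) (hqp : q <= p) :
  [/\ size (V p q l) = (l + 1) * p + (2 * l + 1) * q + l, nzeros (V p q l) = 2 * l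
    & ~~ detects (seedPQ p q) (V p q l)].
Proof.
elim: l => [|l [s z d]] /=.
- split; [rewrite size_nseq; mlia | exact: nz_nseq | exact: ND0].
- split; first by rewrite size_cat size_nseq /= size_cat size_nseq /= s; mlia.
  + by rewrite !nz_cons z; mlia.
  + apply: ND => //.
    * apply: ND => //; first by mlia.
      move=> h; exfalso; mlia.
    * move=> _; exists (q - 1); first by mlia.
      by rewrite nth_cat size_nseq ltnn subnn.
Qed.

Definition Fii p q k := if odd k then (k./2 + 2) * p + (2 * k./2 + 1) * q + k./2
  else (k./2 + 1) * p + (2 * k./2 + 1) * q + k./2.

Lemma FE0 p q l : Fii p q (2 * l) = (l + 1) * p + (2 * l + 1) * q + l.
Proof.
have e : (2 * l)./2 = l by rewrite mul2n half_double.
have o : odd (2 * l) = false by rewrite mul2n odd_double.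
by rewrite /Fii o e.
Qed.

Lemma FE1 p q l : Fii p q (2 * l + 1) = (l + 2) * p + (2 * l + 1) * q + l.
Proof.
have e : (2 * l + 1)./2 = l by rewrite mul2n addn1 /= uphalf_double.
have o : odd (2 * l + 1) = true by rewrite mul2n addn1 /= odd_double.
by rewrite /Fii o e.
Qed.

Lemma parity k : exists l, k = 2 * l \/ k = 2 * l + 1.
Proof.
elim: k => [|k [l [->|->]]]; first by exists 0; left.
- by exists l; right; rewrite addn1.
- by exists l.+1; left; mlia.
Qed.

Lemma crit Q k L : max_undetected_len Q k L -> critical_length Q k (L + 1).
Proof.
move=> [[w [sw zw dw]] hub]; split.
- move=> n hn w' sw' zw'; apply/negPn/negP => hd.
  have := hub w' zw' hd; rewrite sw' => h; mlia.
- move=> m' hm'; case: (leqP (L + 1) m') => // h.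
  have hmL : m' <= L by mlia.
  have := hm' L hmL w sw zw; by rewrite (negbTE dw).
Qed.

Theorem mainTheorem2 (p q : nat) (hq : 1 <= q) (hqp : q <= p) :
  (2 * q + 1 <= p ->
     forall k, 1 <= k -> max_undetected_len (seedPQ p q) k ((k + 1) * p + q)) /\
  (p <= 2 * q + 1 ->
     (forall l, max_undetected_len (seedPQ p q) (2 * l + 1)
                  ((l + 2) * p + (2 * l + 1) * q + l)) /\
     (forall l, 1 <= l -> max_undetected_len (seedPQ p q) (2 * l)
                  ((l + 1) * p + (2 * l + 1) * q + l))) /\
  (forall k L, 1 <= k -> max_undetected_len (seedPQ p q) k L ->
     critical_length (seedPQ p q) k (L + 1)).
Proof.
split; [|split].
- move=> hp k _; split.
  + by have [s z d] := W_ok p q k hq hqp; exists (W p q k).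
  + apply: (ub p q (fun k => (k + 1) * p + q) hq hqp) => //= *; mlia.
- move=> hp.
  have hub : forall k w, nzeros w = k -> ~~ detects (seedPQ p q) w -> size w <= Fii p q k.
    apply: (ub p q (Fii p q) hq hqp).
    + by rewrite (FE0 p q 0); mlia.
    + by rewrite (FE1 p q 0); mlia.
    + move=> k; have [l [->|->]] := parity k.
      * rewrite FE0 (_ : (2 * l).+1 = 2 * l + 1) ?FE1; mlia.
      * rewrite FE1 (_ : (2 * l + 1).+1 = 2 * (l + 1)) ?FE0; mlia.
    + move=> k; have [l [->|->]] := parity k.
      * rewrite FE0 (_ : (2 * l).+2 = 2 * (l + 1)) ?FE0; mlia.
      * rewrite FE1 (_ : (2 * l + 1).+2 = 2 * (l + 1) + 1) ?FE1; mlia.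
  split.
  + move=> l; split.
    * have [s z d] := V_ok p q l hq hqp.
      exists (nseq (p - 1) true ++ false :: V p q l); split.
      -- rewrite size_cat size_nseq /= s; mlia.
      -- by rewrite nz_cons z addn1.
      -- apply: ND => //; first by mlia.
         move=> h; exfalso; mlia.
    * by move=> w zw dw; rewrite -FE1; exact: hub.
  + move=> l _; split.
    * by have [s z d] := V_ok p q l hq hqp; exists (V p q l).
    * by move=> w zw dw; rewrite -FE0; exact: hub.
- by move=> k L _; exact: crit.
Qed.
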